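(* Let $h>0$ and $I(S,C)=\log\frac{1+hS}{1+hSe^{-C}}$ on $S>0$, $C>0$. Then the Hessian of $I$ at $(S,C)$ is negative semidefinite if and only if $$C\ge \log\left(2+\frac{1}{hS}\right).$$ The boundary of this region is parametrized by $\lambda_c\in(0,1)$ as $hS=\frac{\sqrt{\lambda_c}}{1-\sqrt{\lambda_c}}$, $e^{-C}=\frac{\sqrt{\lambda_c}}{1+\sqrt{\lambda_c}}$, and $C\to\log 2$ as $\lambda_c\to 1$. In particular, for every $S>0$ and every $C\in(0,\log 2)$ the Hessian of $I$ at $(S,C)$ is not negative semidefinite.
   Context: Logarithms are natural. $I(S,C)$ is the mutual information spectral density (nats/sec/Hz) at a frequency with power gain $h$, input power density $S$ and fronthaul rate density $C$. *)

(* Defs.v *)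
From Stdlib Require Import Reals.
Open Scope R_scope.

Definition Ifun (h S C : R) : R := ln ((1 + h * S) / (1 + h * S * exp (- C))).

Definition partialS (f : R -> R -> R) (S C l : R) : Prop :=
  derivable_pt_lim (fun s => f s C) S l.
Definition partialC (f : R -> R -> R) (S C l : R) : Prop :=
  derivable_pt_lim (fun c => f S c) C l.

Definition hessian_at (f : R -> R -> R) (S C hSS hSC hCS hCC : R) : Prop :=
  exists fS fC : R -> R -> R,
    (forall s c, 0 < s -> 0 < c -> partialS f s c (fS s c) /\ partialC f s c (fC s c)) /\
    partialS fS S C hSS /\ partialC fS S C hSC /\
    partialS fC S C hCS /\ partialC fC S C hCC.

Definition nsd2 (a b c d : R) : Prop :=
  forall v1 v2 : R, v1 * (a * v1 + b * v2) + v2 * (c * v1 + d * v2) <= 0.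

Definition hessian_nsd (f : R -> R -> R) (S C : R) : Prop :=
  exists a b c d, hessian_at f S C a b c d /\ nsd2 a b c d.

(* Main.v *)
Require Import Defs.
From Stdlib Require Import Reals.
From Stdlib Require Import Lra.
From Coquelicot Require Import Coquelicot.
Open Scope R_scope.

Definition IS h s c := h/(1+h*s) - h*exp(-c)/(1+h*s*exp(-c)).
Definition IC h s c := h*s*exp(-c)/(1+h*s*exp(-c)).
Definition ISS h s c := -(h*h)/((1+h*s)*(1+h*s)) + h*h*exp(-c)*exp(-c)/((1+h*s*exp(-c))*(1+h*s*exp(-c))).
Definition ISC h s c := h*exp(-c)/((1+h*s*exp(-c))*(1+h*s*exp(-c))).
Definition ICC h s c := -(h*s*exp(-c))/((1+h*s*exp(-c))*(1+h*s*exp(-c))).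

Lemma pos1 h s c : 0 < h -> 0 < s -> 0 < 1 + h*s*exp(-c).
Proof. intros. assert (0 < exp (-c)) by apply exp_pos. assert (0 < h*s*exp(-c)) by (repeat apply Rmult_lt_0_compat; auto). lra. Qed.
Lemma pos2 h s : 0 < h -> 0 < s -> 0 < 1 + h*s.
Proof. intros. assert (0 < h*s) by (apply Rmult_lt_0_compat; auto). lra. Qed.

Ltac prep h s c hp Hs := pose proof (pos1 h s c hp Hs); pose proof (pos2 h s hp Hs).

Lemma dIS h s c : 0 < h -> 0 < s -> is_derive (fun s => Ifun h s c) s (IS h s c).
Proof. intros hp Hs. prep h s c hp Hs. unfold Ifun, IS.
auto_derive. repeat split; try lra. apply Rdiv_lt_0_compat; lra.
field. lra. Qed.
Lemma dIC h s c : 0 < h -> 0 < s -> is_derive (fun c => Ifun h s c) c (IC h s c).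
Proof. intros hp Hs. prep h s c hp Hs. unfold Ifun, IC.
auto_derive. repeat split; try lra. apply Rdiv_lt_0_compat; lra.
field. lra. Qed.
Lemma dISS h s c : 0 < h -> 0 < s -> is_derive (fun s => IS h s c) s (ISS h s c).
Proof. intros hp Hs. prep h s c hp Hs. unfold ISS, IS.
auto_derive. repeat split; try lra. field. lra. Qed.
Lemma dISC h s c : 0 < h -> 0 < s -> is_derive (fun c => IS h s c) c (ISC h s c).
Proof. intros hp Hs. prep h s c hp Hs. unfold ISC, IS.
auto_derive. repeat split; try lra. field. lra. Qed.
Lemma dICS h s c : 0 < h -> 0 < s -> is_derive (fun s => IC h s c) s (ISC h s c).
Proof. intros hp Hs. prep h s c hp Hs. unfold ISC, IC.
auto_derive. repeat split; try lra. field. lra. Qed.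
Lemma dICC h s c : 0 < h -> 0 < s -> is_derive (fun c => IC h s c) c (ICC h s c).
Proof. intros hp Hs. prep h s c hp Hs. unfold ICC, IC.
auto_derive. repeat split; try lra. field. lra. Qed.
Lemma loc_pos x : 0 < x -> locally x (fun t => 0 < t).
Proof. intros Hx. exists (mkposreal x Hx). intros y Hy. unfold ball in Hy; simpl in Hy.
unfold AbsRing_ball, abs, minus, plus, opp in Hy; simpl in Hy. apply Rabs_def2 in Hy. lra. Qed.

Lemma ext_uniq (f g : R -> R) x l1 l2 : locally x (fun t => g t = f t) ->
  derivable_pt_lim f x l1 -> is_derive g x l2 -> l1 = l2.
Proof. intros Hl H1 H2. apply is_derive_Reals in H1.
  pose proof (is_derive_ext_loc g f x l2 Hl H2) as H3.
  apply is_derive_Reals in H1. apply is_derive_Reals in H3.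
  exact (uniqueness_limite f x l1 l2 H1 H3). Qed.

Lemma det_id h x u : 0 < h -> 0 < x -> 0 < u ->
 let a := -(h*h)/((1+x)*(1+x)) + h*h*u*u/((1+x*u)*(1+x*u)) in
 let b := h*u/((1+x*u)*(1+x*u)) in
 let d := -(x*u)/((1+x*u)*(1+x*u)) in
 a*d - b*b = h*h*u*(x-(2*x+1)*u)*(x*u+1)/((1+x*u)*(1+x*u)*(1+x*u)*(1+x*u)*(1+x)*(1+x))
 /\ a = h*h*(u-1)*(u*(1+x)+(1+x*u))/((1+x)*(1+x)*(1+x*u)*(1+x*u)).
Proof. intros. assert (0 < x*u) by nra. split; unfold a,b,d; field; lra. Qed.

Lemma ge_ln C y : 0 < y -> (C >= ln y <-> exp C >= y).
Proof. intros Hy. split; intro H.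
- destruct (Rlt_or_le (exp C) y) as [L|L]; [|lra].
  rewrite <- (exp_ln y Hy) in L. apply exp_lt_inv in L. lra.
- destruct (Rlt_or_le C (ln y)) as [L|L]; [|lra].
  apply exp_increasing in L. rewrite exp_ln in L; lra. Qed.

Lemma nsd_iff a b d : a < 0 -> (nsd2 a b b d <-> a*d - b*b >= 0).
Proof. intros Ha. unfold nsd2. split.
- intros H. specialize (H b (-a)).
  replace (b * (a * b + b * - a) + - a * (b * b + d * - a)) with (a*(a*d-b*b)) in H by ring.
  destruct (Rlt_or_le (a*d-b*b) 0) as [L|L]; [|lra].
  assert (0 < a*(a*d-b*b)) by nra. lra.
- intros H v1 v2. assert (0 <= (a*v1+b*v2)*(a*v1+b*v2) + (a*d-b*b)*(v2*v2)).
  { assert (0 <= (a*v1+b*v2)*(a*v1+b*v2)) by apply Rle_0_sqr.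
    assert (0 <= v2*v2) by apply Rle_0_sqr. nra. }
  set (Q := v1 * (a * v1 + b * v2) + v2 * (b * v1 + d * v2)).
  assert (E : a*Q = (a*v1+b*v2)*(a*v1+b*v2) + (a*d-b*b)*(v2*v2)) by (unfold Q; ring).
  destruct (Rle_or_lt Q 0) as [L|L]; auto. assert (a*Q < 0) by nra. lra. Qed.

Lemma key h S C : 0 < h -> 0 < S -> 0 < C ->
  (nsd2 (ISS h S C) (ISC h S C) (ISC h S C) (ICC h S C) <-> C >= ln (2 + 1/(h*S))).
Proof. intros hp Sp Cp.
  set (x := h*S). set (u := exp(-C)).
  assert (xp : 0 < x) by (unfold x; nra).
  assert (up : 0 < u) by apply exp_pos.
  assert (u1 : u < 1). { unfold u. rewrite <- exp_0. apply exp_increasing. lra. }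
  assert (E1 : ISS h S C = -(h*h)/((1+x)*(1+x)) + h*h*u*u/((1+x*u)*(1+x*u))) by reflexivity.
  assert (E2 : ISC h S C = h*u/((1+x*u)*(1+x*u))) by reflexivity.
  assert (E3 : ICC h S C = -(x*u)/((1+x*u)*(1+x*u))) by reflexivity.
  rewrite E1, E2, E3. destruct (det_id h x u hp xp up) as [D A].
  assert (xu : 0 < x*u) by nra.
  assert (P1 : 0 < (1+x*u)*(1+x*u)*(1+x*u)*(1+x*u)*(1+x)*(1+x)).
  { repeat apply Rmult_lt_0_compat; lra. }
  assert (P2 : 0 < (1+x)*(1+x)*(1+x*u)*(1+x*u)).
  { repeat apply Rmult_lt_0_compat; lra. }
  rewrite nsd_iff.
  2:{ rewrite A. apply Rdiv_neg_pos; [|exact P2].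
      assert (0 < u*(1+x)+(1+x*u)) by nra.
      assert (0 < h*h) by nra. assert (h*h*(u-1) < 0) by nra. nra. }
  rewrite D. rewrite ge_ln by (assert (0 < 1/x) by (apply Rdiv_lt_0_compat; lra); lra).
  assert (Eu : exp C = / u) by (unfold u; rewrite exp_Ropp, Rinv_inv; reflexivity).
  rewrite Eu.
  assert (0 < h*h*u) by (assert (0 < h*h) by nra; nra).
  clear E1 E2 E3. split; intro H0; rename H0 into Hq.
  - assert (x - (2*x+1)*u >= 0).
    { destruct (Rlt_or_le (x - (2*x+1)*u) 0) as [L|L]; [|lra].
      exfalso. assert (h*h*u*(x-(2*x+1)*u)*(x*u+1) < 0).
      { assert (h*h*u*(x-(2*x+1)*u) < 0) by nra. nra. }
      assert (h*h*u*(x-(2*x+1)*u)*(x*u+1)/((1+x*u)*(1+x*u)*(1+x*u)*(1+x*u)*(1+x)*(1+x)) < 0)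
        by (apply Rdiv_neg_pos; auto).
      lra. }
    apply Rle_ge. replace (2 + 1/x) with ((2*x+1)/x) by (field; lra).
    replace (/u) with (1/u) by (field; lra).
    apply Rmult_le_reg_r with (r := x*u); [nra|].
    replace ((2*x+1)/x*(x*u)) with ((2*x+1)*u) by (field; lra).
    replace (1/u*(x*u)) with x by (field; lra). lra.
  - assert (x - (2*x+1)*u >= 0).
    { replace (2 + 1/x) with ((2*x+1)/x) in Hq by (field; lra).
      assert (H' : (2*x+1)/x * (x*u) <= /u * (x*u)) by (apply Rmult_le_compat_r; nra).
      replace ((2*x+1)/x*(x*u)) with ((2*x+1)*u) in H' by (field; lra).
      replace (/u*(x*u)) with x in H' by (field; lra). lra. }
    apply Rle_ge. apply Rdiv_le_0_compat; [|exact P1].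
    assert (0 <= h*h*u*(x-(2*x+1)*u)) by nra. nra.
Qed.

Lemma L4 : limit1_in (fun lam => - ln (sqrt lam / (1 + sqrt lam))) (fun lam => 0 < lam < 1) (ln 2) 1.
Proof.
  assert (Hc : continuity_pt (fun lam => - ln (sqrt lam / (1 + sqrt lam))) 1).
  { apply continuity_pt_filterlim.
    assert (Hd : ex_derive (fun lam => - ln (sqrt lam / (1 + sqrt lam))) 1).
    { auto_derive. rewrite sqrt_1. repeat split; lra. }
    exact (ex_derive_continuous _ _ Hd). }
  assert (E : - ln (sqrt 1 / (1 + sqrt 1)) = ln 2).
  { rewrite sqrt_1. replace (1/(1+1)) with (/2) by field. rewrite ln_Rinv; lra. }
  intros eps Heps. destruct (Hc eps Heps) as [alp [Ha H]]. exists alp. split; auto.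
  intros x [Hx Hd]. rewrite <- E. apply H. split; auto. split. exact I. lra.
Qed.

Lemma part1 h (hpos : 0 < h) S C : 0 < S -> 0 < C ->
     (hessian_nsd (Ifun h) S C <-> C >= ln (2 + 1 / (h * S))).
Proof. intros Sp Cp. rewrite <- key by auto. split.
- intros [a [b [c [d [[fS [fC [Hall [H1 [H2 [H3 H4]]]]]] Hn]]]]].
  assert (Ea : a = ISS h S C).
  { apply (ext_uniq (fun s => fS s C) (fun s => IS h s C) S); auto.
    - apply filter_imp with (P := fun t => 0 < t); [|apply loc_pos; auto].
      intros t Ht. destruct (Hall t C Ht Cp) as [K _].
      symmetry. apply (uniqueness_limite (fun s => Ifun h s C) t); auto.
      apply is_derive_Reals, dIS; auto.
    - apply dISS; auto. }
  assert (Eb : b = ISC h S C).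
  { apply (ext_uniq (fun c => fS S c) (fun c => IS h S c) C); auto.
    - apply filter_imp with (P := fun t => 0 < t); [|apply loc_pos; auto].
      intros t Ht. destruct (Hall S t Sp Ht) as [K _].
      symmetry. apply (uniqueness_limite (fun s => Ifun h s t) S); auto.
      apply is_derive_Reals, dIS; auto.
    - apply dISC; auto. }
  assert (Ec : c = ISC h S C).
  { apply (ext_uniq (fun s => fC s C) (fun s => IC h s C) S); auto.
    - apply filter_imp with (P := fun t => 0 < t); [|apply loc_pos; auto].
      intros t Ht. destruct (Hall t C Ht Cp) as [_ K].
      symmetry. apply (uniqueness_limite (fun c => Ifun h t c) C); auto.
      apply is_derive_Reals, dIC; auto.
    - apply dICS; auto. }
  assert (Ed : d = ICC h S C).
  { apply (ext_uniq (fun c => fC S c) (fun c => IC h S c) C); auto.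
    - apply filter_imp with (P := fun t => 0 < t); [|apply loc_pos; auto].
      intros t Ht. destruct (Hall S t Sp Ht) as [_ K].
      symmetry. apply (uniqueness_limite (fun c => Ifun h S c) t); auto.
      apply is_derive_Reals, dIC; auto.
    - apply dICC; auto. }
  subst; auto.
- intros Hn. exists (ISS h S C), (ISC h S C), (ISC h S C), (ICC h S C). split; auto.
  exists (IS h), (IC h). repeat split.
  + apply is_derive_Reals, dIS; auto.
  + apply is_derive_Reals, dIC; auto.
  + apply is_derive_Reals, dISS; auto.
  + apply is_derive_Reals, dISC; auto.
  + apply is_derive_Reals, dICS; auto.
  + apply is_derive_Reals, dICC; auto.
Qed.

Theorem mainTheorem4 (h : R) (hpos : 0 < h) :
  (forall S C, 0 < S -> 0 < C ->
     (hessian_nsd (Ifun h) S C <-> C >= ln (2 + 1 / (h * S)))) /\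
  (forall lam S C, 0 < lam < 1 ->
     h * S = sqrt lam / (1 - sqrt lam) ->
     exp (- C) = sqrt lam / (1 + sqrt lam) ->
     0 < S /\ 0 < C /\ C = ln (2 + 1 / (h * S))) /\
  (forall S C, 0 < S -> C = ln (2 + 1 / (h * S)) ->
     exists lam, 0 < lam < 1 /\
       h * S = sqrt lam / (1 - sqrt lam) /\
       exp (- C) = sqrt lam / (1 + sqrt lam)) /\
  limit1_in (fun lam => - ln (sqrt lam / (1 + sqrt lam))) (fun lam => 0 < lam < 1) (ln 2) 1 /\
  (forall S C, 0 < S -> 0 < C < ln 2 -> ~ hessian_nsd (Ifun h) S C).
Proof.
  split; [|split; [|split; [|split]]].
  - apply part1; auto.
  - intros lam S C [l0 l1] HS HC.
    assert (s0 : 0 < sqrt lam) by (apply sqrt_lt_R0; lra).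
    assert (s1 : sqrt lam < 1) by (rewrite <- sqrt_1; apply sqrt_lt_1_alt; lra).
    set (s := sqrt lam) in *.
    assert (x0 : 0 < h*S) by (rewrite HS; apply Rdiv_lt_0_compat; lra).
    split; [nra|]. split.
    + assert (exp (-C) < exp 0) by (rewrite exp_0, HC; apply Rmult_lt_reg_r with (r := 1+s); [lra|];
        replace (s/(1+s)*(1+s)) with s by (field; lra); lra).
      apply exp_lt_inv in H. lra.
    + rewrite HS. replace (2 + 1/(s/(1-s))) with (/ exp (-C)) by (rewrite HC; field; lra).
      rewrite ln_Rinv by apply exp_pos. rewrite ln_exp. ring.
  - intros S C Sp HC. set (x := h*S) in *.
    assert (xp : 0 < x) by (unfold x; nra).
    set (s := x/(1+x)).
    assert (s0 : 0 < s) by (unfold s; apply Rdiv_lt_0_compat; lra).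
    assert (s1 : s < 1) by (unfold s; apply Rmult_lt_reg_r with (r := 1+x); [lra|];
        replace (x/(1+x)*(1+x)) with x by (field; lra); lra).
    exists (s*s). rewrite sqrt_square by lra. split; [split; nra|]. split.
    + unfold s. field. split; lra.
    + rewrite HC. rewrite exp_Ropp, exp_ln.
      * unfold s. field. split; [lra|]. split; [lra|]. lra.
      * assert (0 < 1/x) by (apply Rdiv_lt_0_compat; lra). lra.
  - exact L4.
  - intros S C Sp [C0 C1] Hn. apply (part1 h hpos S C Sp C0) in Hn.
    assert (xp : 0 < h*S) by nra.
    assert (0 < 1/(h*S)) by (apply Rdiv_lt_0_compat; lra).
    apply ge_ln in Hn; [|lra].
    apply exp_increasing in C1. rewrite exp_ln in C1 by lra. lra.
Qed.
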